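(* Let $\mathbb{K}$ be an algebraically closed field. Every triangular dual $3$-net in $PG(2,\mathbb{K})$ realizes a cyclic group which is isomorphic to a (finite) subgroup of the multiplicative group $\mathbb{K}^*$.
   Context: A dual $3$-net of order $n$ in $PG(2,\mathbb{K})$ is a triple $(\Lambda_1,\Lambda_2,\Lambda_3)$ of pairwise disjoint point sets, each of size $n$, such that every line meeting two distinct components meets each component in exactly one point. It realizes a group $(G,\cdot)$ if there are bijections $\alpha:G\to\Lambda_1$, $\beta:G\to\Lambda_2$, $\gamma:G\to\Lambda_3$ such that $a\cdot b=c$ if and only if $\alpha(a),\beta(b),\gamma(c)$ are collinear. A dual $3$-net of order $n\ge4$ is triangular if its three components lie respectively on the three sides of a triangle. *)

(* Defs.v *)
From HB Require Import structures.
From mathcomp Require Import all_boot all_order all_algebra all_fingroup.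
Set Implicit Arguments. Unset Strict Implicit. Unset Printing Implicit Defensive.
Import GRing.Theory.
Local Open Scope ring_scope.

(* Homogeneous coordinates: a point (resp. a line) of PG(2,K) is represented
   by a nonzero row vector of K^3, up to a nonzero scalar. *)
Definition hvec (K : fieldType) := 'rV[K]_3.

Definition same_pt (K : fieldType) (p q : hvec K) : Prop :=
  exists c : K, c != 0 /\ q = c *: p.

Definition on_line (K : fieldType) (l p : hvec K) : Prop :=
  \sum_(i < 3) l 0 i * p 0 i = 0.

Definition collinear (K : fieldType) (p q r : hvec K) : Prop :=
  exists l : hvec K, l != 0 /\ on_line l p /\ on_line l q /\ on_line l r.

Definition point_set (K : fieldType) (n : nat) (L : 'I_n -> hvec K) : Prop :=
  (forall a, L a != 0) /\ (forall a b, same_pt (L a) (L b) -> a = b).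

(* Components L1, L2, L3 indexed by 'I_3 (component k is L k). *)
Definition disjoint_sets (K : fieldType) (n : nat) (L : 'I_3 -> 'I_n -> hvec K)
  : Prop :=
  forall i j a b, i != j -> ~ same_pt (L i a) (L j b).

Definition dual_3net (K : fieldType) (n : nat) (L : 'I_3 -> 'I_n -> hvec K)
  : Prop :=
  (forall k, point_set (L k)) /\ disjoint_sets L /\
  forall (l : hvec K) (i j : 'I_3), l != 0 -> i != j ->
    (exists a, on_line l (L i a)) -> (exists b, on_line l (L j b)) ->
    forall k : 'I_3, exists! c : 'I_n, on_line l (L k c).

Definition triangular (K : fieldType) (n : nat) (L : 'I_3 -> 'I_n -> hvec K)
  : Prop :=
  (4 <= n)%N /\
  exists v : 'I_3 -> hvec K,
    (forall k, v k != 0) /\ ~ collinear (v 0) (v 1) (v 2) /\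
    forall k : 'I_3, exists l : hvec K, l != 0 /\
      (forall k', k' != k -> on_line l (v k')) /\
      (forall a, on_line l (L k a)).

Definition bij_on (gT : finGroupType) (G : {group gT}) (n : nat)
  (f : gT -> 'I_n) : Prop :=
  {in G &, injective f} /\ forall i : 'I_n, exists2 x, x \in G & f x = i.

Definition realizes (K : fieldType) (n : nat) (L : 'I_3 -> 'I_n -> hvec K)
  (gT : finGroupType) (G : {group gT}) : Prop :=
  exists alpha beta gamma : gT -> 'I_n,
    bij_on G alpha /\ bij_on G beta /\ bij_on G gamma /\
    forall a b c, a \in G -> b \in G -> c \in G ->
      ((a * b)%g = c <-> collinear (L 0 (alpha a)) (L 1 (beta b)) (L 2 (gamma c))).

Definition embeds_in_units (K : fieldType) (gT : finGroupType) (G : {group gT})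
  : Prop :=
  exists phi : gT -> K,
    (forall x, x \in G -> phi x != 0) /\
    (forall x y, x \in G -> y \in G -> phi (x * y)%g = phi x * phi y) /\
    {in G &, injective phi}.
Arguments embeds_in_units K [gT] G.

(* Main.v *)
Require Import Defs.
From mathcomp Require Import all_boot all_order all_algebra all_fingroup all_solvable.
From mathcomp Require Import ring.
Set Implicit Arguments. Unset Strict Implicit. Unset Printing Implicit Defensive.
Import GRing.Theory.
Local Open Scope ring_scope.

Lemma det33 (R : comNzRingType) (A : 'M[R]_3) :
  \det A = A 0 0 * (A 1 1 * A 2 2 - A 1 2 * A 2 1)
         - A 0 1 * (A 1 0 * A 2 2 - A 1 2 * A 2 0)
         + A 0 2 * (A 1 0 * A 2 1 - A 1 1 * A 2 0).
Proof.
rewrite (expand_det_row _ 0) !big_ord_recr big_ord0 /=.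
rewrite /cofactor !(expand_det_row _ 0) !big_ord_recr !big_ord0 /= .
rewrite /cofactor !det_mx11 !mxE /=.
set a := fun x y : nat => A (inord x) (inord y).
have Ha : forall x y : 'I_3, A x y = a x y by move=> x y; rewrite /a !inord_val.
rewrite !Ha /=; clearbody a.
rewrite /bump /=.
have E1 : (1 %% 3 = 1)%N by [].
have E2 : ((1 %% 3 + 1 %% 3) %% 3 = 2)%N by [].
rewrite !E2 !E1 /= !add0r !expr0 !expr1 ?expr2.
rewrite ?addn0 ?add0n; have E3 : (1+1 = 2)%N by []. rewrite !E3. ring.
Qed.

Lemma ord3 (P : 'I_3 -> Prop) : P 0 -> P 1 -> P 2 -> forall i, P i.
Proof.
move=> H0 H1 H2 [[|[|[|m]]] Hm] //.
- by rewrite (_ : Ordinal Hm = 0) //; apply: val_inj.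
- by rewrite (_ : Ordinal Hm = 1) //; apply: val_inj.
- by rewrite (_ : Ordinal Hm = 2) //; apply: val_inj.
Qed.

Section Geom.
Variable K : fieldType.

Definition dot (l p : hvec K) := \sum_(i < 3) l 0 i * p 0 i.
Definition mxr (f : 'I_3 -> hvec K) : 'M[K]_3 := \matrix_(i, j) f i 0 j.
Definition pts3 (p q r : hvec K) (i : 'I_3) :=
  if val i == 0%N then p else if val i == 1%N then q else r.

Lemma mulTE (u : hvec K) (f : 'I_3 -> hvec K) j : (u *m (mxr f)^T) 0 j = dot u (f j).
Proof. rewrite !mxE; apply: eq_bigr => k _; by rewrite !mxE. Qed.

Lemma collinear_det p q r : collinear p q r <-> \det (mxr (pts3 p q r)) = 0.
Proof.
split.
  move=> [l [l0 [Hp [Hq Hr]]]]; apply/eqP; rewrite -det_tr; apply/det0P; exists l => //.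
  by apply/rowP; apply: ord3; rewrite mulTE mxE.
move/eqP; rewrite -det_tr => /det0P [u u0 Hu]; exists u; split => //.
have H (j : 'I_3) := congr1 (fun M : 'rV[K]_3 => M 0 j) Hu.
have H0 := H 0; have H1 := H 1; have H2 := H 2; rewrite mulTE mxE /pts3 /= in H0; rewrite mulTE mxE /pts3 /= in H1.
rewrite mulTE mxE /pts3 /= in H2.
by split; [exact: H0 | split; [exact: H1 | exact: H2]].
Qed.

Lemma det_coord (f g : 'I_3 -> hvec K) :
  \det (mxr f) * \det (mxr g) = \det (\matrix_(i, k) dot (g k) (f i)).
Proof.
rewrite -[\det (mxr g)]det_tr -det_mulmx; congr (\det _); apply/matrixP => i k.
rewrite !mxE; apply: eq_bigr => j _; by rewrite !mxE mulrC.
Qed.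

Lemma dotC (l p : hvec K) : dot l p = dot p l.
Proof. by apply: eq_bigr => i _; rewrite mulrC. Qed.

Lemma ratio_iff (N D : K) : D != 0 -> (N / D = -1 <-> N + D = 0).
Proof.
move=> D0; split => H.
  have -> : N = N / D * D by rewrite mulfVK.
  by rewrite H mulN1r addNr.
have -> : N = - D by apply/eqP; rewrite -subr_eq0 opprK H.
by rewrite mulNr divff.
Qed.

Section Lines.
Variable lf : 'I_3 -> hvec K.
Hypothesis dL : \det (mxr lf) != 0.

Lemma coord_scale (p p' : hvec K) (s : K) :
  (forall k, dot (lf k) p' = s * dot (lf k) p) -> p' = s *: p.
Proof.
move=> H.
have U : (mxr lf)^T \in unitmx by rewrite unitmxE det_tr unitfE.
have e : p' *m (mxr lf)^T = (s *: p) *m (mxr lf)^T.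
  apply/rowP => k; rewrite -scalemxAl [RHS]mxE !mulTE -!(dotC (lf k)); exact: H.
by rewrite -(mulmxK U p') e mulmxK.
Qed.

Lemma coord_ratio (x y z : 'I_3) (p p' : hvec K) :
  (forall k, k = x \/ k = y \/ k = z) ->
  dot (lf x) p = 0 -> dot (lf x) p' = 0 -> dot (lf z) p != 0 -> dot (lf z) p' != 0 ->
  dot (lf y) p / dot (lf z) p = dot (lf y) p' / dot (lf z) p' ->
  same_pt p p'.
Proof.
move=> Hk hx hx' hz hz' e.
exists (dot (lf z) p' / dot (lf z) p); split; first by rewrite mulf_neq0 // invr_eq0.
apply: coord_scale => k; case: (Hk k) => [->|[->|->]].
- by rewrite hx hx' mulr0.
- have -> : dot (lf y) p' = dot (lf y) p' / dot (lf z) p' * dot (lf z) p' by rewrite mulfVK.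
  by rewrite -e; field.
- by rewrite mulfVK.
Qed.

End Lines.

Lemma geom n (L : 'I_3 -> 'I_n -> hvec K) : dual_3net L -> triangular L ->
  exists (i0 : 'I_n) (A B C : 'I_n -> K),
   (forall i, A i != 0) /\ (forall j, B j != 0) /\ (forall k, C k != 0) /\
   injective A /\ injective B /\ injective C /\
   (forall i j, exists k, A i * B j * C k = -1) /\
   (forall i j k, collinear (L 0 i) (L 1 j) (L 2 k) <-> A i * B j * C k = -1).
Proof.
move=> [Hps [Hdis Hnet]] [n4 [v [v0 [Hnc Hside]]]].
have [lf Hlf] := @fin_all_exists _ (fun _ => hvec K) _ Hside.
have lf0 k : lf k != 0 by case: (Hlf k).
have Hlv k k' : k' != k -> dot (lf k) (v k') = 0 by case: (Hlf k) => _ [H _]; exact: H.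
have HlL k a : dot (lf k) (L k a) = 0 by case: (Hlf k) => _ [_ H]; exact: H.
have n0 : (0 < n)%N by apply: leq_trans n4.
have n1 : (1 < n)%N by apply: leq_trans n4.
pose i0 := Ordinal n0; pose i1 := Ordinal n1.
have NZ x k a : x != k -> dot (lf k) (L x a) != 0.
  move=> xk; apply/eqP => H.
  have [c [_ Hu]] := Hnet (lf k) x k (lf0 k) xk (ex_intro _ a H) (ex_intro _ i0 (HlL k i0)) k.
  have e1 := Hu i0 (HlL k i0); have e2 := Hu i1 (HlL k i1).
  by have := congr1 val (etrans (esym e1) e2).
have Hd k : dot (lf k) (v k) != 0.
  apply/eqP => H; apply: Hnc; exists (lf k); split; first exact: lf0.
  have Hall k' : on_line (lf k) (v k').
    by case: (eqVneq k' k) => [->|ne]; [exact: H | exact: Hlv].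
  by split; [exact: Hall | split; exact: Hall].
have dL : \det (mxr lf) != 0.
  have dV := det_coord v lf; rewrite [RHS]det33 !mxE in dV.
  rewrite (Hlv 0 1) // (Hlv 0 2) // (Hlv 1 0) // (Hlv 1 2) // (Hlv 2 0) // (Hlv 2 1) // in dV.
  apply/eqP => H; rewrite H mulr0 in dV.
  move/eqP: dV; apply/negP; rewrite eq_sym.
  have -> : dot (lf 0) (v 0) * (dot (lf 1) (v 1) * dot (lf 2) (v 2) - 0 * 0) - 0 * (0 * dot (lf 2) (v 2) - 0 * 0) + 0 * (0 * 0 - dot (lf 1) (v 1) * 0)
     = dot (lf 0) (v 0) * (dot (lf 1) (v 1) * dot (lf 2) (v 2)) by ring.
  by rewrite !mulf_neq0.
pose cf k p := dot (lf k) p.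
have Key p q r : cf 0 p = 0 -> cf 1 q = 0 -> cf 2 r = 0 ->
   (collinear p q r <-> cf 1 p * cf 2 q * cf 0 r + cf 2 p * cf 0 q * cf 1 r = 0).
  move=> Hp Hq Hr; rewrite collinear_det.
  have e := det_coord (pts3 p q r) lf; rewrite [RHS]det33 !mxE /pts3 /= in e.
  rewrite /cf in Hp Hq Hr *; rewrite Hp Hq Hr in e.
  have -> : dot (lf 1) p * dot (lf 2) q * dot (lf 0) r + dot (lf 2) p * dot (lf 0) q * dot (lf 1) r
     = \det (mxr (pts3 p q r)) * \det (mxr lf) by rewrite e; ring.
  split => [->|]; first by rewrite mul0r.
  by move/eqP; rewrite mulf_eq0 (negbTE dL) orbF => /eqP.
pose A i := cf 1 (L 0 i) / cf 2 (L 0 i).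
pose B j := cf 2 (L 1 j) / cf 0 (L 1 j).
pose C k := cf 0 (L 2 k) / cf 1 (L 2 k).
have ABC i j k : collinear (L 0 i) (L 1 j) (L 2 k) <-> A i * B j * C k = -1.
  rewrite Key ?[cf _ _]HlL //.
  have D0 : cf 2 (L 0 i) * cf 0 (L 1 j) * cf 1 (L 2 k) != 0 by rewrite !mulf_neq0 ?NZ.
  rewrite -(ratio_iff _ D0).
  have -> : A i * B j * C k = cf 1 (L 0 i) * cf 2 (L 1 j) * cf 0 (L 2 k) / (cf 2 (L 0 i) * cf 0 (L 1 j) * cf 1 (L 2 k)).
    rewrite /A /B /C; field; rewrite !NZ //.
  by [].
exists i0, A, B, C.
split; first by move=> i; rewrite mulf_neq0 ?invr_eq0 ?NZ.
split; first by move=> i; rewrite mulf_neq0 ?invr_eq0 ?NZ.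
split; first by move=> i; rewrite mulf_neq0 ?invr_eq0 ?NZ.
split.
  move=> i i' e; case: (Hps 0) => _ H; apply: H.
  apply: (coord_ratio (x := 0) (y := 1) (z := 2) dL) => //; rewrite ?HlL ?NZ //.
  by apply: ord3; auto.
split.
  move=> i i' e; case: (Hps 1) => _ H; apply: H.
  apply: (coord_ratio (x := 1) (y := 2) (z := 0) dL) => //; rewrite ?HlL ?NZ //.
  by apply: ord3; auto.
split.
  move=> i i' e; case: (Hps 2) => _ H; apply: H.
  apply: (coord_ratio (x := 2) (y := 0) (z := 1) dL) => //; rewrite ?HlL ?NZ //.
  by apply: ord3; auto.
split => //.
move=> i j.
have : collinear (L 0 i) (L 1 j) (L 0 i).
  by rewrite collinear_det det33 !mxE /pts3 /=; ring.
move=> [l [l0 [Hp [Hq _]]]].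
have [c [Hc _]] := Hnet l 0 1 l0 isT (ex_intro _ i Hp) (ex_intro _ j Hq) 2.
exists c; apply/ABC; exists l; split => //; split => //; split => //.
Qed.

End Geom.
Lemma inj_surj (n : nat) (f : 'I_n -> 'I_n) : injective f -> forall y, exists x, f x = y.
Proof. move=> /injF_bij [g fg gf] y; exists (g y); exact: gf. Qed.

Lemma mkperm (K : fieldType) n (B : 'I_n -> K) (h : K) :
  h != 0 -> (forall j, B j != 0) -> injective B ->
  (forall j, exists j', B j' = h * B j) ->
  exists g : {perm 'I_n}, forall j, B (g j) = h * B j.
Proof.
move=> h0 B0 Binj H.
pose f j := odflt j [pick j' | B j' == h * B j].
have Hf : forall j, B (f j) = h * B j.
  move=> j; rewrite /f; case: pickP => [x /eqP //|/= N].
  by have [j' Hj'] := H j; move: (N j'); rewrite Hj' eqxx.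
have fI : injective f.
  by move=> x y Hxy; apply: Binj; apply: (mulfI h0); rewrite -!Hf Hxy.
by exists (perm fI) => j; rewrite permE.
Qed.

Section Alg.
Variables (K : fieldType) (n : nat) (i0 : 'I_n) (A B C : 'I_n -> K).
Hypotheses (A0 : forall i, A i != 0) (B0 : forall j, B j != 0) (C0 : forall k, C k != 0).
Hypotheses (Ainj : injective A) (Binj : injective B) (Cinj : injective C).
Hypothesis E : forall i j, exists k, A i * B j * C k = -1.

Definition fk i j := odflt i0 [pick k | A i * B j * C k == -1].
Lemma fkP i j : A i * B j * C (fk i j) = -1.
Proof.
rewrite /fk; case: pickP => [x /eqP //|/= N].
by have [k Hk] := E i j; move: (N k); rewrite Hk eqxx.
Qed.

Lemma P1 i j : exists j', A i * B j = A i0 * B j'.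
Proof.
have fI : injective (fun j' => fk i0 j').
  move=> x y /= Hxy; apply: Binj; apply: (mulfI (A0 i0)); apply: (mulIf (C0 (fk i0 x))).
  by rewrite fkP Hxy fkP.
have [j' Hj'] := inj_surj fI (fk i j); exists j'.
apply: (mulIf (C0 (fk i j))); by rewrite fkP -Hj' fkP.
Qed.

Lemma P2 j : exists i', A i0 * B j = A i' * B i0.
Proof.
have fI : injective (fun i' => fk i' i0).
  move=> x y /= Hxy; apply: Ainj; apply: (mulIf (B0 i0)); apply: (mulIf (C0 (fk x i0))).
  by rewrite fkP Hxy fkP.
have [i' Hi'] := inj_surj fI (fk i0 j); exists i'.
apply: (mulIf (C0 (fk i0 j))); by rewrite fkP -Hi' fkP.
Qed.

Lemma P3 k : exists j, A i0 * B j * C k = -1.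
Proof.
have fI : injective (fun j' => fk i0 j').
  move=> x y /= Hxy; apply: Binj; apply: (mulfI (A0 i0)); apply: (mulIf (C0 (fk i0 x))).
  by rewrite fkP Hxy fkP.
have [j Hj] := inj_surj fI k; exists j; by rewrite -Hj fkP.
Qed.

Definition Gset := [set g : {perm 'I_n} | [forall j, B (g j) * B i0 == B (g i0) * B j]].
Definition phi (g : {perm 'I_n}) := B (g i0) / B i0.

Lemma GP (g : {perm 'I_n}) : g \in Gset -> forall j, B (g j) = phi g * B j.
Proof.
rewrite inE => /forallP H j; have := eqP (H j); rewrite /phi => e.
apply: (mulIf (B0 i0)); rewrite e; field; exact: B0.
Qed.

Lemma GI (g : {perm 'I_n}) h : (forall j, B (g j) = h * B j) -> g \in Gset /\ phi g = h.
Proof.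
move=> H; split; last by rewrite /phi H mulfK.
by rewrite inE; apply/forallP => j; rewrite !H; apply/eqP; ring.
Qed.

Lemma Ggroup : group_set Gset.
Proof.
apply/group_setP; split.
  by rewrite inE; apply/forallP => j; rewrite !perm1 mulrC.
move=> x y Hx Hy; apply: (proj1 (GI (h := phi y * phi x) _)) => j.
by rewrite permM (GP Hy) (GP Hx) mulrA.
Qed.

Definition G := Group Ggroup.

Lemma phiM x y : x \in G -> y \in G -> phi (x * y)%g = phi x * phi y.
Proof.
move=> Hx Hy; rewrite {1}/phi permM (GP Hy) (GP Hx) /phi; field; exact: B0.
Qed.

Lemma phiI : {in G &, injective phi}.
Proof.
move=> x y Hx Hy e; apply/permP => j; apply: Binj; by rewrite (GP Hx) (GP Hy) e.
Qed.

Lemma phi0 x : phi x != 0.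
Proof. by rewrite /phi mulf_neq0 // invr_eq0. Qed.

Lemma existsG (h : K) : (exists i, A i = h * A i0) -> exists2 g, g \in G & phi g = h.
Proof.
move=> [i Hi].
have h0 : h != 0.
  by apply: contra (A0 i); rewrite Hi => /eqP ->; rewrite mul0r.
have [g Hg] : exists g : {perm 'I_n}, forall j, B (g j) = h * B j.
  apply: mkperm => // j; have [j' Hj'] := P1 i j; exists j'.
  apply: (mulfI (A0 i0)); rewrite -Hj' Hi; ring.
by have [H1 H2] := GI Hg; exists g.
Qed.

Definition alpha (g : {perm 'I_n}) := odflt i0 [pick i | A i == phi g * A i0].
Definition beta (g : {perm 'I_n}) := g i0.
Definition gamma (g : {perm 'I_n}) := fk i0 (g i0).

Lemma alphaP g : g \in G -> A (alpha g) = phi g * A i0.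
Proof.
move=> Hg; rewrite /alpha; case: pickP => [x /eqP //|/= N].
have [i' Hi'] := P2 (g i0).
move: (N i'); suff -> : A i' = phi g * A i0 by rewrite eqxx.
apply: (mulIf (B0 i0)); rewrite -Hi' /phi; field; exact: B0.
Qed.

Lemma betaP g : g \in G -> B (beta g) = phi g * B i0.
Proof. by move=> Hg; rewrite /beta (GP Hg). Qed.

Lemma gammaP g : g \in G -> A i0 * (phi g * B i0) * C (gamma g) = -1.
Proof. by move=> Hg; rewrite -(GP Hg) fkP. Qed.

Lemma existsB j : exists2 g, g \in G & g i0 = j.
Proof.
have [i' Hi'] := P2 j.
have [g Hg e] : exists2 g, g \in G & phi g = B j / B i0.
  apply: existsG; exists i'; apply: (mulIf (B0 i0)); rewrite -Hi'; field; exact: B0.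
exists g => //; apply: Binj; rewrite (GP Hg) e; field; exact: B0.
Qed.

Lemma alg_main (P : 'I_n -> 'I_n -> 'I_n -> Prop) :
  (forall i j k, P i j k <-> A i * B j * C k = -1) ->
  cyclic G /\ bij_on G alpha /\ bij_on G beta /\ bij_on G gamma /\
   (forall a b c, a \in G -> b \in G -> c \in G ->
      ((a * b)%g = c <-> P (alpha a) (beta b) (gamma c))) /\
   (forall x, x \in G -> phi x != 0) /\
   (forall x y, x \in G -> y \in G -> phi (x * y)%g = phi x * phi y) /\
   {in G &, injective phi}.
Proof.
move=> HP.
have phi1 : phi 1 = 1 by rewrite /phi perm1 divff //; exact: B0.
split.
  apply: (@field_mul_group_cyclic _ _ _ phi); first by move=> x y Hx Hy; exact: phiM.
  move=> x Hx; split; last by move->.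
  by move=> e; apply: phiI; rewrite ?group1 // e phi1.
split.
  split.
    move=> x y Hx Hy e; apply: phiI => //; apply: (mulIf (A0 i0)).
    by rewrite -!alphaP // e.
  move=> i; have [|g Hg e] := existsG (h := A i / A i0); first by exists i; rewrite mulfVK.
  by exists g => //; apply: Ainj; rewrite alphaP // e mulfVK.
split.
  split.
    move=> x y Hx Hy e; apply: phiI => //; apply: (mulIf (B0 i0)).
    by rewrite -!betaP // e.
  by move=> j; have [g Hg e] := existsB j; exists g.
split.
  split.
    move=> x y Hx Hy e; apply: phiI => //; apply: (mulIf (B0 i0)); apply: (mulfI (A0 i0)).
    apply: (mulIf (C0 (gamma x))); rewrite gammaP // e gammaP //.
  move=> k; have [j Hj] := P3 k; have [g Hg e] := existsB j; exists g => //.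
  apply: Cinj; apply: (mulfI (mulf_neq0 (A0 i0) (B0 j))).
  by rewrite Hj -e /gamma fkP.
split.
  move=> a b c Ha Hb Hc; rewrite HP alphaP // betaP //.
  have Hg := gammaP Hc.
  have Cn := C0 (gamma c).
  split.
    move=> eab; rewrite -Hg -eab phiM //.
    have := A0 i0; have := B0 i0; move=> ? ?; ring.
  move=> e; apply: phiI => //; first exact: groupM.
  rewrite phiM //; apply: (mulfI (A0 i0)); apply: (mulIf (C0 (gamma c))).
  apply: (mulIf (B0 i0)).
  transitivity (-1 : K); first by rewrite -e; ring.
  by rewrite -Hg; ring.
split; first by move=> x _; exact: phi0.
split; first exact: phiM.
exact: phiI.
Qed.

End Alg.

Theorem proposition4p3 (K : closedFieldType) (n : nat)
  (L : 'I_3 -> 'I_n -> hvec K) :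
  dual_3net L -> triangular L ->
  exists (gT : finGroupType) (G : {group gT}),
    cyclic G /\ realizes L G /\ embeds_in_units K G.
Proof.
move=> Hdn Htr.
have [i0 [A [B [C [A0 [B0 [C0 [Ai [Bi [Ci [E HP]]]]]]]]]]] := geom Hdn Htr.
have [Hcyc [Ha [Hb [Hc [Hr [Hphi0 [HphiM HphiI]]]]]]] := alg_main i0 A0 B0 C0 Ai Bi Ci E HP.
exists _, (G i0 B0); split; first exact: Hcyc.
split.
  exists (alpha i0 A B), (beta i0), (gamma i0 A B C).
  split; [exact Ha | split; [exact Hb | split; [exact Hc | exact Hr]]].
exists (phi i0 B); split; [exact Hphi0 | split; [exact HphiM | exact HphiI]].
Qed.
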